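(* Let $\mathcal{F}$ be an indecomposable coherent sheaf on $\mathbb{P}^1$. Then $\mathcal{F}$ is described by a defining triple $(\mathcal{F}',\mathcal{F}'',\varphi)$ of one of the following forms, where $\mathcal{F}'=\widetilde{M'}$, $\mathcal{F}''=\widetilde{M''}$ are indecomposable coherent sheaves (or $0$) on $U_1$, $U_2$ respectively and $\varphi:\mathcal{F}'|_{U_1\cap U_2}\cong\mathcal{F}''|_{U_1\cap U_2}$: (1) $(\mathcal{F}',0,0)$ with $\Gamma_{M'}$ of type 1; (2) $(0,\mathcal{F}'',0)$ with $\Gamma_{M''}$ of type 1; (3) $(\mathcal{F}',\mathcal{F}'',\varphi)$ with $\Gamma_{M'}$, $\Gamma_{M''}$ of type 2, and after choosing isomorphisms $\mathcal{F}'|_{U_1\cap U_2}\cong\mathcal{L}$ and $\mathcal{F}''|_{U_1\cap U_2}\cong\mathcal{L}$, $\varphi$ is identified with $\phi_n$ for some $n\in\mathbb{Z}$; (4) $(\mathcal{F}',\mathcal{F}'',\psi)$ with $\Gamma_{M'}$, $\Gamma_{M''}$ of type 3, and after choosing isomorphisms $\mathcal{F}'|_{U_1\cap U_2}\cong\mathcal{C}_k$ and $\mathcal{F}''|_{U_1\cap U_2}\cong\mathcal{C}_k$, $\psi$ is identified with $\psi_m$ for some $m\in\mathbb{Z}/k\mathbb{Z}$. Moreover, $\mathcal{F}$ is torsion in cases (1) and (2), and torsion-free in cases (3) and (4).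
   Context: Monoids are commutative with $1$ and absorbing $0$; a module is a pointed set $(M,* )$ with action satisfying $1m=m$, $a(bm)=(ab)m$, $0m=*$. $\mathbb P^1$ is the monoid scheme obtained by gluing $U_1=\operatorname{MSpec}(\langle t\rangle)$ and $U_2=\operatorname{MSpec}(\langle t^{-1}\rangle)$ along $U_1\cap U_2=\operatorname{MSpec}(\langle t,t^{-1}\rangle)$, where $\langle t\rangle=\{0,1,t,t^2,\dots\}$, $\langle t^{-1}\rangle=\{0,1,t^{-1},t^{-2},\dots\}$, $\langle t,t^{-1}\rangle=\{0\}\cup\{t^n:n\in\mathbb Z\}$. A coherent sheaf on $\mathbb P^1$ is equivalently a defining triple $(\mathcal F',\mathcal F'',\varphi)$ of coherent sheaves $\mathcal F'=\widetilde{M'}$ on $U_1$, $\mathcal F''=\widetilde{M''}$ on $U_2$ ($M',M''$ finitely generated modules; restriction to $U_1\cap U_2$ is localization at $t$, resp. $t^{-1}$) and a gluing isomorphism $\varphi$ over $U_1\cap U_2$. A coherent sheaf is indecomposable if non-zero and not a direct sum (sectionwise wedge sum) of two non-zero coherent sheaves. For a module $M$ over $\langle s\rangle$ ($s=t$ or $t^{-1}$), $\Gamma_M$ is the directed graph on $M\setminus\{*\}$ with edges $m\to sm$ whenever $sm\ne*$. Type 1: a rooted tree (underlying undirected graph a tree with a unique vertex without outgoing edge, reached from every vertex by a directed path). Type 2: a finite rooted tree whose root is joined to the initial vertex of an infinite directed ray $v_0\to v_1\to\cdots$. Type 3: an oriented directed cycle with rooted trees attached. $\mathcal L=\widetilde{\langle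 t,t^{-1}\rangle}$ on $U_1\cap U_2$, with automorphisms $\phi_n$ induced by multiplication by $t^n$, $n\in\mathbb Z$. $\mathcal C_k=\widetilde{C_k}$ with $C_k=\{*,1,t,\dots,t^{k-1}\}$ and $t$ acting by the cyclic permutation $1\mapsto t\mapsto\cdots\mapsto t^{k-1}\mapsto1$; its automorphisms $\psi_m$ are induced by multiplication by $t^m$ and depend only on $m\bmod k$. An element $m$ of a module is torsion if some nonzero element of the monoid sends it to $*$; a module is torsion if all elements are torsion and torsion-free if only $*$ is; a quasicoherent sheaf is torsion (resp. torsion-free) if its sections over every open affine form a torsion (resp. torsion-free) module. *)

(* Defs.v *)
From Stdlib Require Import ZArith Arith List Lia ClassicalEpsilon.
From Stdlib Require Import Relation_Operators.

Set Implicit Arguments.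

Record monoid0 := Monoid0 {
  mcar :> Type;
  mone : mcar;
  mzero : mcar;
  mmul : mcar -> mcar -> mcar;
  mmulA : forall a b c, mmul a (mmul b c) = mmul (mmul a b) c;
  mmulC : forall a b, mmul a b = mmul b a;
  mmul1 : forall a, mmul mone a = a;
  mmul0 : forall a, mmul mzero a = mzero }.

(* <s> = {0,1,s,s^2,...}: None = 0, Some j = s^j *)
Definition tmul (a b : option nat) : option nat :=
  match a, b with Some i, Some j => Some (i + j) | _, _ => None end.

Lemma tmulA a b c : tmul a (tmul b c) = tmul (tmul a b) c.
Proof. destruct a, b, c; simpl; try reflexivity; f_equal; lia. Qed.
Lemma tmulC a b : tmul a b = tmul b a.
Proof. destruct a, b; simpl; try reflexivity; f_equal; lia. Qed.
Lemma tmul1 a : tmul (Some 0) a = a.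
Proof. destruct a; reflexivity. Qed.
Lemma tmul0 a : tmul None a = None.
Proof. reflexivity. Qed.

Definition tmon : monoid0 := @Monoid0 (option nat) (Some 0) None tmul tmulA tmulC tmul1 tmul0.

(* <t, t^-1> = {0} u {t^n : n in Z}: None = 0, Some n = t^n *)
Definition lmul (a b : option Z) : option Z :=
  match a, b with Some i, Some j => Some (i + j)%Z | _, _ => None end.

Lemma lmulA a b c : lmul a (lmul b c) = lmul (lmul a b) c.
Proof. destruct a, b, c; simpl; try reflexivity; f_equal; lia. Qed.
Lemma lmulC a b : lmul a b = lmul b a.
Proof. destruct a, b; simpl; try reflexivity; f_equal; lia. Qed.
Lemma lmul1 a : lmul (Some 0%Z) a = a.
Proof. destruct a; reflexivity. Qed.
Lemma lmul0 a : lmul None a = None.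
Proof. reflexivity. Qed.

Definition lmon : monoid0 := @Monoid0 (option Z) (Some 0%Z) None lmul lmulA lmulC lmul1 lmul0.

Record premodule (A : monoid0) := PreModule {
  pcar :> Type;
  ppt : pcar;
  pact : mcar A -> pcar -> pcar }.

Record module (A : monoid0) := Module {
  mpre :> premodule A;
  act1 : forall m, pact mpre (mone A) m = m;
  actA : forall a b m, pact mpre a (pact mpre b m) = pact mpre (mmul A a b) m;
  act0 : forall m, pact mpre (mzero A) m = ppt mpre }.

Definition fingen A (M : premodule A) : Prop :=
  exists gs : list (pcar M), forall m,
    m = ppt M \/ exists a g, In g gs /\ m = pact M a g.

Definition is_morphism A (M N : premodule A) (f : M -> N) : Prop :=
  f (ppt M) = ppt N /\ forall a x, f (pact M a x) = pact N a (f x).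
Arguments is_morphism {A M N} f.

Definition is_iso A (M N : premodule A) (f : M -> N) : Prop :=
  is_morphism f /\ exists g : N -> M, (forall x, g (f x) = x) /\ (forall y, f (g y) = y).
Arguments is_iso {A M N} f.

Definition torsion_elt A (M : premodule A) (m : M) : Prop :=
  exists a, a <> mzero A /\ pact M a m = ppt M.
Arguments torsion_elt {A M} m.
Definition torsion_mod A (M : premodule A) : Prop := forall m : M, torsion_elt m.
Definition torsionfree_mod A (M : premodule A) : Prop :=
  forall m : M, torsion_elt m -> m = ppt M.

Definition trivial_mod A (M : premodule A) : Prop := forall m : M, m = ppt M.

(* direct sums = wedge sums, indecomposability *)
Definition submod A (M : premodule A) (P : M -> Prop) : Prop :=
  P (ppt M) /\ forall a x, P x -> P (pact M a x).
Arguments submod {A M} P.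
Definition wedge_split A (M : premodule A) (P Q : M -> Prop) : Prop :=
  submod P /\ submod Q /\ (forall x, P x -> Q x -> x = ppt M) /\ (forall x, P x \/ Q x).
Arguments wedge_split {A M} P Q.
Definition nonzero_pred A (M : premodule A) (P : M -> Prop) : Prop :=
  exists x, P x /\ x <> ppt M.
Arguments nonzero_pred {A M} P.
Definition indecomposable_mod A (M : premodule A) : Prop :=
  (exists x : M, x <> ppt M) /\
  ~ (exists P Q : M -> Prop, wedge_split P Q /\ nonzero_pred P /\ nonzero_pred Q).

Definition quot (X : Type) (R : X -> X -> Prop) : Type :=
  {P : X -> Prop | exists x, P = R x}.
Definition cls (X : Type) (R : X -> X -> Prop) (x : X) : quot R :=
  exist _ (R x) (ex_intro _ x eq_refl).
Definition repr (X : Type) (R : X -> X -> Prop) (q : quot R) : X :=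
  proj1_sig (constructive_indefinite_description _ (proj2_sig q)).

(* ---------- Localization of a <s>-module at s ----------
   m / s^n ~ m' / s^n'  iff  s^(n'+k) m = s^(n+k) m' for some k. *)
Definition locR (M : premodule tmon) (x y : pcar M * nat) : Prop :=
  exists k : nat, pact M (Some (snd y + k)) (fst x) = pact M (Some (snd x + k)) (fst y).

Definition loc_car (M : premodule tmon) : Type := quot (locR M).

(* sgn = false : s = t (module over <t>), sgn = true : s = t^-1 (module over <t^-1>).
   The localization is a module over <t,t^-1>; t^z acts as s^e with e = z or -z. *)
Definition loc_act (sgn : bool) (M : premodule tmon) (a : option Z) (q : loc_car M)
  : loc_car M :=
  match a with
  | None => cls (locR M) (ppt M, 0)
  | Some z =>
      let e := (if sgn then Z.opp z else z) in
      let x := repr q in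
      cls (locR M) (pact M (Some (Z.to_nat e)) (fst x), snd x + Z.to_nat (Z.opp e))
  end.

Definition loc (sgn : bool) (M : premodule tmon) : premodule lmon :=
  @PreModule lmon (loc_car M) (cls (locR M) (ppt M, 0)) (@loc_act sgn M).

Definition inloc (M : premodule tmon) (P : M -> Prop) (q : loc_car M) : Prop :=
  exists m n, P m /\ q = cls (locR M) (m, n).
Arguments inloc {M} P q.

Record triple := Triple {
  F1 : module tmon;           (* M' over <t>  , sections on U1 *)
  F2 : module tmon;           (* M'' over <t^-1>, sections on U2 (generator Some 1 = t^-1) *)
  F1fg : fingen F1;
  F2fg : fingen F2;
  glue : loc false F1 -> loc true F2;
  glue_iso : is_iso glue }.

Definition triple_nonzero (F : triple) : Prop :=
  (exists x : F1 F, x <> ppt (F1 F)) \/ (exists x : F2 F, x <> ppt (F2 F)).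

(* F is the (sectionwise wedge) direct sum of the subsheaves given by (P1,P2) and (Q1,Q2) *)
Definition triple_split (F : triple) (P1 Q1 : F1 F -> Prop) (P2 Q2 : F2 F -> Prop) : Prop :=
  wedge_split P1 Q1 /\ wedge_split P2 Q2 /\
  (forall q, inloc P1 q <-> inloc P2 (glue F q)) /\
  (forall q, inloc Q1 q <-> inloc Q2 (glue F q)).

Definition indecomposable_triple (F : triple) : Prop :=
  triple_nonzero F /\
  ~ (exists P1 Q1 P2 Q2, triple_split F P1 Q1 P2 Q2 /\
       (nonzero_pred P1 \/ nonzero_pred P2) /\ (nonzero_pred Q1 \/ nonzero_pred Q2)).

(* torsion / torsion-free sheaves: sections on U1, U2, U1 n U2 *)
Definition torsion_triple (F : triple) : Prop :=
  torsion_mod (F1 F) /\ torsion_mod (F2 F) /\ torsion_mod (loc false (F1 F)).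
Definition torsionfree_triple (F : triple) : Prop :=
  torsionfree_mod (F1 F) /\ torsionfree_mod (F2 F) /\ torsionfree_mod (loc false (F1 F)).

Section Graph.
Variable M : premodule tmon.
Definition sM (m : M) : M := pact M (Some 1) m.
Definition gvert (m : M) : Prop := m <> ppt M.

(* graph induced on a vertex set P: edges e -> sM e with P e, P (sM e).
   joins e a b : edge (labelled by its source) e has endpoints a, b *)
Definition joins (P : M -> Prop) (e a b : M) : Prop :=
  P e /\ P (sM e) /\ ((a = e /\ b = sM e) \/ (a = sM e /\ b = e)).
Definition uadj (P : M -> Prop) (a b : M) : Prop := exists e, joins P e a b.
Definition uconnected (P : M -> Prop) : Prop :=
  forall u v, P u -> P v -> clos_refl_trans M (uadj P) u v.
Definition ucycle (P : M -> Prop) : Prop :=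
  exists vs es : list M,
    length vs = length es /\ 1 <= length vs /\ NoDup vs /\ NoDup es /\
    forall i, i < length vs ->
      joins P (nth i es (ppt M)) (nth i vs (ppt M)) (nth (S i mod length vs) vs (ppt M)).
Definition utree (P : M -> Prop) : Prop := uconnected P /\ ~ ucycle P.
Definition dreach (P : M -> Prop) (u v : M) : Prop :=
  exists n, (forall j, j <= n -> P (Nat.iter j sM u)) /\ Nat.iter n sM u = v.
Definition is_root (P : M -> Prop) (r : M) : Prop := P r /\ ~ P (sM r).
Definition rooted_tree (P : M -> Prop) : Prop :=
  utree P /\ (exists! r, is_root P r) /\
  (forall r v, is_root P r -> P v -> dreach P v r).

Definition gamma_type1 : Prop := rooted_tree gvert.

Definition gamma_type2 : Prop :=
  exists (T : M -> Prop) (v : nat -> M) (r : M),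
    (forall x, T x -> gvert x) /\ (exists l : list M, forall x, T x -> In x l) /\
    (forall i, gvert (v i)) /\ (forall i, sM (v i) = v (S i)) /\
    (forall i j, v i = v j -> i = j) /\
    (forall x, gvert x <-> T x \/ exists i, x = v i) /\
    (forall x i, T x -> x <> v i) /\
    rooted_tree T /\ is_root T r /\ sM r = v 0.

Definition gamma_type3 : Prop :=
  exists cs : list M,
    1 <= length cs /\ NoDup cs /\ (forall c, In c cs -> gvert c) /\
    (forall i, i < length cs ->
       sM (nth i cs (ppt M)) = nth (S i mod length cs) cs (ppt M)) /\
    forall x, gvert x -> ~ In x cs ->
      let K := fun y => (gvert y /\ ~ In y cs) /\
                 clos_refl_trans M (uadj (fun z => gvert z /\ ~ In z cs)) x y in
      rooted_tree K /\ (forall r, is_root K r -> In (sM r) cs).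
End Graph.

Definition Lmod : premodule lmon := @PreModule lmon (option Z) None lmul.
Definition phi_n (n : Z) (x : Lmod) : Lmod := lmul (Some n) x.

Definition cvalid (k : nat) (x : option Z) : Prop :=
  match x with None => True | Some i => (0 <= i < Z.of_nat k)%Z end.
Definition Ccar (k : nat) : Type := {x : option Z | cvalid k x}.
Definition Cpt (k : nat) : Ccar k := exist _ None I.

Lemma cvalid_shift (k : nat) (i z : Z) :
  cvalid k (Some i) -> cvalid k (Some ((i + z) mod Z.of_nat k)%Z).
Proof. simpl; intros H; apply Z.mod_pos_bound; lia. Qed.

(* t^z acts on {1,t,...,t^(k-1)} by cyclic rotation: t^i |-> t^((i+z) mod k) *)
Definition Cact (k : nat) (a : option Z) (x : Ccar k) : Ccar k :=
  match a with
  | None => Cpt k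
  | Some z =>
      match x with
      | exist _ o h =>
          match o as o' return cvalid k o' -> Ccar k with
          | None => fun _ => Cpt k
          | Some i => fun h => exist _ (Some ((i + z) mod Z.of_nat k)%Z) (cvalid_shift z h)
          end h
      end
  end.

Definition Cmod (k : nat) : premodule lmon := @PreModule lmon (Ccar k) (Cpt k) (@Cact k).
Definition psi_m (k : nat) (m : Z) (x : Cmod k) : Cmod k := @Cact k (Some m) x.

Definition case1 (F : triple) : Prop :=
  trivial_mod (F2 F) /\ indecomposable_mod (F1 F) /\ gamma_type1 (F1 F) /\
  torsion_triple F.
Definition case2 (F : triple) : Prop :=
  trivial_mod (F1 F) /\ indecomposable_mod (F2 F) /\ gamma_type1 (F2 F) /\
  torsion_triple F.
Definition case3 (F : triple) : Prop :=
  indecomposable_mod (F1 F) /\ indecomposable_mod (F2 F) /\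
  gamma_type2 (F1 F) /\ gamma_type2 (F2 F) /\
  (exists (al : loc false (F1 F) -> Lmod) (be : loc true (F2 F) -> Lmod) (n : Z),
     is_iso al /\ is_iso be /\ forall q, be (glue F q) = phi_n n (al q)) /\
  torsionfree_triple F.
Definition case4 (F : triple) : Prop :=
  indecomposable_mod (F1 F) /\ indecomposable_mod (F2 F) /\
  gamma_type3 (F1 F) /\ gamma_type3 (F2 F) /\
  (exists (k : nat) (al : loc false (F1 F) -> Cmod k) (be : loc true (F2 F) -> Cmod k)
          (m : Z),
     0 < k /\ is_iso al /\ is_iso be /\ forall q, be (glue F q) = @psi_m k m (al q)) /\
  torsionfree_triple F.

(* Main.v *)
Require Import Defs.
From Stdlib Require Import Setoid ZArith Arith List Lia Classical ClassicalEpsilon FunctionalExtensionality PropExtensionality ProofIrrelevance Relation_Operators.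

Set Implicit Arguments.

Definition sp (M : premodule tmon) (j : nat) (m : M) : M := pact M (Some j) m.

Section Basic.
Variable M : module tmon.

Lemma sp0 m : sp M 0 m = m.
Proof. unfold sp. exact (act1 M m). Qed.

Lemma spA i j m : sp M i (sp M j m) = sp M (i + j) m.
Proof. unfold sp. rewrite (actA M). reflexivity. Qed.

Lemma pact_None m : pact M None m = ppt M.
Proof. exact (act0 M m). Qed.

Lemma sp_pt j : sp M j (ppt M) = ppt M.
Proof.
  unfold sp. rewrite <- (act0 M (ppt M)) at 1. rewrite (actA M). simpl.
  apply (act0 M).
Qed.

Lemma pact_pt a : pact M a (ppt M) = ppt M.
Proof. destruct a. apply sp_pt. apply pact_None. Qed.

Lemma sp_eq i j m : i = j -> sp M i m = sp M j m.
Proof. intros ->; reflexivity. Qed.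

Lemma iter_sp n u : Nat.iter n (sM M) u = sp M n u.
Proof.
  induction n; simpl. now rewrite sp0.
  rewrite IHn. unfold sM. change (pact M (Some 1) (sp M n u)) with (sp M 1 (sp M n u)).
  rewrite spA. reflexivity.
Qed.

Lemma sM_sp u : sM M u = sp M 1 u.
Proof. reflexivity. Qed.

Definition tor (m : M) := exists k, sp M k m = ppt M.

Lemma tor_elt m : torsion_elt (M:=mpre M) m <-> tor m.
Proof.
  split.
  - intros [a [Ha Hm]]. destruct a as [k|]. exists k; exact Hm. now elim Ha.
  - intros [k Hk]. exists (Some k). split. discriminate. exact Hk.
Qed.

Definition Ez (x y : M) := exists a b, sp M a x = sp M b y /\ sp M a x <> ppt M.

Lemma Ez_sym x y : Ez x y -> Ez y x.
Proof. intros [a [b [H1 H2]]]. exists b, a. split; congruence. Qed.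

Lemma Ez_trans x y z : Ez x y -> Ez y z -> Ez x z.
Proof.
  intros [a [b [H1 H2]]] [c [d [H3 H4]]].
  destruct (le_lt_dec c b).
  - exists a, (b - c + d). split; auto.
    rewrite H1. rewrite (sp_eq y (eq_sym (Nat.sub_add c b l))).
    rewrite <- spA, H3, spA. apply sp_eq; lia.
  - exists (c - b + a), d. rewrite <- spA, H1, spA.
    rewrite (sp_eq y (Nat.sub_add b c (Nat.lt_le_incl _ _ l))). split; auto.
Qed.

Lemma Ez_refl x : x <> ppt M -> Ez x x.
Proof. intros. exists 0, 0. rewrite sp0. auto. Qed.

Lemma Ez_nz x y : Ez x y -> x <> ppt M /\ y <> ppt M.
Proof.
  intros [a [b [H1 H2]]]. split; intro E; subst; apply H2.
  apply sp_pt. rewrite H1. apply sp_pt.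
Qed.

Lemma tor_sp j m : tor (sp M j m) -> tor m.
Proof. intros [k Hk]. exists (k + j). rewrite <- spA. exact Hk. Qed.

Lemma tor_pt : tor (ppt M).
Proof. exists 0. apply sp0. Qed.

Lemma submod_triv : submod (M:=mpre M) (fun m => m = ppt M).
Proof. split; auto. intros a x ->. apply pact_pt. Qed.

Lemma submod_all : submod (M:=mpre M) (fun _ => True).
Proof. split; auto. Qed.

Lemma wsplit_all_triv : wedge_split (M:=mpre M) (fun _ => True) (fun m => m = ppt M).
Proof.
  split. apply submod_all. split. apply submod_triv. split; auto.
Qed.

Lemma wsplit_triv_all : wedge_split (M:=mpre M) (fun m => m = ppt M) (fun _ => True).
Proof.
  split. apply submod_triv. split. apply submod_all. split; auto.
Qed.

Lemma wsplit_tor : wedge_split (M:=mpre M) tor (fun m => m = ppt M \/ ~ tor m).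
Proof.
  split; [|split; [|split]].
  - split. apply tor_pt. intros a x Hx. destruct a as [j|].
    + destruct Hx as [k Hk]. exists k. change (pact M (Some j) x) with (sp M j x).
      rewrite spA, Nat.add_comm, <- spA, Hk. apply sp_pt.
    + rewrite pact_None. apply tor_pt.
  - split. auto. intros a x [Hx|Hx].
    + left. subst. apply pact_pt.
    + destruct a as [j|]. 2:{ left. apply pact_None. }
      right. intro H. apply Hx. apply (tor_sp j). exact H.
  - intros x H [H'|H']; auto. contradiction.
  - intros x. destruct (classic (tor x)); auto.
Qed.

Lemma wsplit_ez x : wedge_split (M:=mpre M) (fun m => m = ppt M \/ Ez x m)
   (fun m => m = ppt M \/ ~ Ez x m).
Proof.
  split; [|split; [|split]].
  - split. auto. intros a m [Hm|Hm].
    + left. subst. apply pact_pt.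
    + destruct a as [j|]. 2:{ left. apply pact_None. }
      change (pact M (Some j) m) with (sp M j m).
      destruct (classic (sp M j m = ppt M)) as [E|E]; auto. right.
      destruct Hm as [a [b [H1 H2]]].
      destruct (le_lt_dec j b).
      * exists a, (b - j). rewrite spA, (sp_eq m (Nat.sub_add j b l)). auto.
      * exists (a + (j - b)), 0. rewrite sp0. rewrite Nat.add_comm, <- spA, H1, spA.
        rewrite (sp_eq m (Nat.sub_add b j (Nat.lt_le_incl _ _ l))). auto.
  - split. auto. intros a m [Hm|Hm].
    + left. subst. apply pact_pt.
    + destruct a as [j|]. 2:{ left. apply pact_None. }
      right. intros [a [b [H1 H2]]]. apply Hm. exists a, (b + j).
      rewrite <- spA. auto.
  - intros m H [H'|H']; auto. destruct H; auto. contradiction.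
  - intros m. destruct (classic (Ez x m)); auto.
Qed.

Lemma indec_conn x y : indecomposable_mod (mpre M) -> x <> ppt M -> y <> ppt M -> Ez x y.
Proof.
  intros [_ Hn] Hx Hy. apply NNPP. intro Hc. apply Hn.
  exists (fun m => m = ppt M \/ Ez x m), (fun m => m = ppt M \/ ~ Ez x m).
  split. apply wsplit_ez. split.
  - exists x. split; auto. right. apply Ez_refl; auto.
  - exists y. split; auto.
Qed.

Lemma conn_indec : (exists x, x <> ppt M) ->
  (forall x y, x <> ppt M -> y <> ppt M -> Ez x y) -> indecomposable_mod (mpre M).
Proof.
  intros Hnz Hc. split. exact Hnz.
  intros [P [Q [[HP [HQ [Hd _]]] [[x [Px Hx]] [y [Qy Hy]]]]]].
  destruct (Hc x y Hx Hy) as [a [b [H1 H2]]]. apply H2.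
  apply Hd. apply (proj2 HP (Some a)); auto.
  rewrite H1. apply (proj2 HQ (Some b)); auto.
Qed.

End Basic.
Set Implicit Arguments.


Section Loc.
Variable M : module tmon.

Definition cl (m : M) (n : nat) : loc_car (mpre M) := cls (locR (mpre M)) (m, n).

Lemma locR_refl x : locR (mpre M) x x.
Proof. exists 0. reflexivity. Qed.

Lemma locR_sym x y : locR (mpre M) x y -> locR (mpre M) y x.
Proof. intros [k H]. exists k. symmetry. exact H. Qed.

Lemma locR_trans x y z : locR (mpre M) x y -> locR (mpre M) y z -> locR (mpre M) x z.
Proof.
  destruct x as [m1 n1], y as [m2 n2], z as [m3 n3]. unfold locR; simpl.
  intros [k H1] [l H2]. exists (n2 + k + l).
  change (sp M (n3 + (n2 + k + l)) m1 = sp M (n1 + (n2 + k + l)) m3).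
  change (sp M (n2 + k) m1 = sp M (n1 + k) m2) in H1.
  change (sp M (n3 + l) m2 = sp M (n2 + l) m3) in H2.
  replace (n3 + (n2 + k + l)) with ((n3 + l) + (n2 + k)) by lia.
  rewrite <- spA, H1, spA.
  replace (n3 + l + (n1 + k)) with ((n1 + k) + (n3 + l)) by lia.
  rewrite <- spA, H2, spA. apply sp_eq; lia.
Qed.

Lemma quot_eq (P Q : pcar M * nat -> Prop) (p : exists x, P = locR (mpre M) x)
  (q : exists x, Q = locR (mpre M) x) : P = Q ->
  @eq (quot (locR (mpre M))) (exist _ P p) (exist _ Q q).
Proof. intros E. subst. f_equal. apply proof_irrelevance. Qed.

Lemma cls_eq x y : cls (locR (mpre M)) x = cls (locR (mpre M)) y <-> locR (mpre M) x y.
Proof.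
  split.
  - intros E. assert (H : locR (mpre M) x = locR (mpre M) y)
      by exact (f_equal (@proj1_sig _ _) E).
    rewrite H. apply locR_refl.
  - intros H. apply quot_eq. apply functional_extensionality. intros z.
    apply propositional_extensionality. split; intro H'.
    + apply locR_trans with x; auto. apply locR_sym; auto.
    + apply locR_trans with y; auto.
Qed.

Lemma cls_repr (q : loc_car (mpre M)) : cls (locR (mpre M)) (repr q) = q.
Proof.
  destruct q as [P p]. unfold repr, cls. simpl.
  destruct (constructive_indefinite_description _ p) as [x Hx]. simpl.
  apply quot_eq. auto.
Qed.

Lemma cl_surj q : exists m n, q = cl m n.
Proof.
  exists (fst (repr q)), (snd (repr q)). unfold cl. rewrite <- surjective_pairing.
  symmetry; apply cls_repr.
Qed.

Lemma cl_eq m n m' n' : cl m n = cl m' n' <-> exists k, sp M (n' + k) m = sp M (n + k) m'.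
Proof. unfold cl. rewrite cls_eq. unfold locR. simpl. reflexivity. Qed.

Lemma cl_zero m n : cl m n = cl (ppt M) 0 <-> tor M m.
Proof.
  rewrite cl_eq. split; intros [k H]; exists k.
  - simpl in H. rewrite H. apply sp_pt.
  - simpl. rewrite H. symmetry; apply sp_pt.
Qed.

Lemma cl_shift m n j : cl m n = cl (sp M j m) (n + j).
Proof. apply cl_eq. exists 0. rewrite spA. apply sp_eq. lia. Qed.

Definition Ee (sgn : bool) (z : Z) : Z := if sgn then (- z)%Z else z.

Lemma act_cl sgn z m n : loc_act sgn (Some z) (cl m n) =
   cl (sp M (Z.to_nat (Ee sgn z)) m) (n + Z.to_nat (- Ee sgn z)).
Proof.
  unfold loc_act. fold (Ee sgn z).
  set (x := repr (cl m n)).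
  assert (Hx : locR (mpre M) x (m, n)). { apply cls_eq. unfold x. rewrite cls_repr. reflexivity. }
  destruct x as [m1 n1]. simpl. destruct Hx as [k Hk]. simpl in Hk.
  change (sp M (n + k) m1 = sp M (n1 + k) m) in Hk.
  apply cl_eq. exists k. rewrite !spA.
  change (pact M (Some (Z.to_nat (Ee sgn z))) m1) with (sp M (Z.to_nat (Ee sgn z)) m1).
  rewrite spA.
  replace (n + Z.to_nat (- Ee sgn z) + k + Z.to_nat (Ee sgn z)) with
    ((Z.to_nat (- Ee sgn z) + Z.to_nat (Ee sgn z)) + (n + k)) by lia.
  rewrite <- spA, Hk, spA. apply sp_eq. lia.
Qed.

Lemma Ee_add sgn z w : Ee sgn (z + w) = (Ee sgn z + Ee sgn w)%Z.
Proof. destruct sgn; simpl; lia. Qed.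

Lemma Ee_0 sgn : Ee sgn 0 = 0%Z.
Proof. destruct sgn; reflexivity. Qed.

Lemma Ee_inv sgn e : exists z, Ee sgn z = e.
Proof. destruct sgn. exists (- e)%Z; simpl; lia. exists e; reflexivity. Qed.

Section S.
Variable sgn : bool.
Let X := loc sgn (mpre M).

Lemma pactX a q : pact X a q = loc_act sgn a q.
Proof. reflexivity. Qed.

Lemma X_pt : ppt X = cl (ppt M) 0.
Proof. reflexivity. Qed.

Lemma act0_X q : pact X (Some 0%Z) q = q.
Proof.
  destruct (cl_surj q) as [m [n ->]]. rewrite pactX, act_cl, Ee_0. simpl.
  rewrite sp0, Nat.add_0_r. reflexivity.
Qed.

Lemma actN_X q : pact X None q = ppt X.
Proof. reflexivity. Qed.

Lemma act_pt_X a : pact X a (ppt X) = ppt X.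
Proof.
  destruct a as [z|]; [|reflexivity]. rewrite X_pt. rewrite pactX, act_cl.
  apply cl_zero. rewrite sp_pt. apply tor_pt.
Qed.

Lemma actZ_X z w q : pact X (Some z) (pact X (Some w) q) = pact X (Some (z + w)%Z) q.
Proof.
  destruct (cl_surj q) as [m [n ->]]. rewrite !pactX, !act_cl, Ee_add.
  apply cl_eq. exists 0. rewrite !spA. apply sp_eq. lia.
Qed.

Lemma actA_X a b q : pact X a (pact X b q) = pact X (lmul a b) q.
Proof.
  destruct a as [z|]; [|reflexivity]. destruct b as [w|].
  - apply actZ_X.
  - simpl lmul. rewrite actN_X. apply act_pt_X.
Qed.

Lemma tfree_X : (forall m : M, tor M m -> m = ppt M) ->
  forall z q, pact X (Some z) q = ppt X -> q = ppt X.
Proof.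
  intros Ht z q. destruct (cl_surj q) as [m [n ->]]. rewrite pactX, act_cl, X_pt.
  intros H. apply cl_zero in H. apply tor_sp in H. apply Ht in H. subst.
  apply cl_zero. apply tor_pt.
Qed.

Lemma orbit_cl : (forall m : M, tor M m -> m = ppt M) -> forall (x m : M) n,
  m <> ppt M -> (Ez M x m <-> exists z, cl m n = pact X (Some z) (cl x 0)).
Proof.
  intros Ht x m n Hm. split.
  - intros [a [b [H1 H2]]].
    destruct (Ee_inv sgn (Z.of_nat a - Z.of_nat b - Z.of_nat n)) as [z Hz].
    exists z. rewrite pactX, act_cl, Hz. apply cl_eq.
    exists (a + b + n). rewrite spA.
    set (e := (Z.of_nat a - Z.of_nat b - Z.of_nat n)%Z).
    replace (0 + Z.to_nat (- e) + (a + b + n)) with ((Z.to_nat (- e) + a + n) + b) by lia.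
    rewrite <- (spA M _ b), <- H1, spA. apply sp_eq. unfold e. lia.
  - intros [z Hz]. rewrite pactX, act_cl in Hz. apply cl_eq in Hz.
    destruct Hz as [k Hk]. rewrite spA in Hk. exists (n + k + Z.to_nat (Ee sgn z)), (0 + Z.to_nat (- Ee sgn z) + k).
    split. symmetry; exact Hk.
    intro E. apply Hm. apply Ht. exists (0 + Z.to_nat (- Ee sgn z) + k). rewrite Hk. exact E.
Qed.

End S.
End Loc.
Set Implicit Arguments.

Lemma least (Q : nat -> Prop) n : Q n -> exists m, Q m /\ forall j, j < m -> ~ Q j.
Proof.
  induction n as [n IH] using lt_wf_ind. intros Hn.
  destruct (classic (exists j, j < n /\ Q j)) as [[j [Hj Qj]]|H].
  - exact (IH j Hj Qj).
  - exists n. split; auto. intros j Hj Qj. apply H. eauto.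
Qed.

Lemma max_index (F : nat -> nat) L : 1 <= L -> exists i, i < L /\ forall j, j < L -> F j <= F i.
Proof.
  induction L; intros HL. lia.
  destruct (Nat.eq_dec L 0) as [->|HL0].
  - exists 0. split. lia. intros j Hj. assert (j = 0) by lia. subst; lia.
  - destruct IHL as [i [Hi Hmax]]. lia.
    destruct (le_lt_dec (F L) (F i)).
    + exists i. split. lia. intros j Hj. destruct (Nat.eq_dec j L). subst; auto. apply Hmax; lia.
    + exists L. split. lia. intros j Hj. destruct (Nat.eq_dec j L). subst; auto.
      specialize (Hmax j ltac:(lia)). lia.
Qed.

Lemma crt_sym (A : Type) (R : A -> A -> Prop) : (forall a b, R a b -> R b a) ->
  forall u v, clos_refl_trans A R u v -> clos_refl_trans A R v u.
Proof.
  intros HR u v H. induction H.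
  - apply rt_step; auto.
  - apply rt_refl.
  - eapply rt_trans; eauto.
Qed.

Section Graph.
Variable M : module tmon.

Lemma uadj_sym P a b : uadj (mpre M) P a b -> uadj (mpre M) P b a.
Proof.
  intros [e [He1 [He2 [[-> ->]|[-> ->]]]]]; exists e; repeat split; auto.
Qed.

Lemma path_iter (P : M -> Prop) u n : (forall j, j <= n -> P (sp M j u)) ->
  clos_refl_trans _ (uadj (mpre M) P) u (sp M n u).
Proof.
  induction n; intros H.
  - rewrite sp0. apply rt_refl.
  - apply rt_trans with (sp M n u). apply IHn. intros; apply H; lia.
    apply rt_step. exists (sp M n u). split. apply H; lia.
    rewrite sM_sp, spA. split. apply H; lia. left. split; auto.
Qed.

Lemma path_to (P : M -> Prop) u n v : (forall j, j <= n -> P (sp M j u)) -> sp M n u = v ->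
  clos_refl_trans _ (uadj (mpre M) P) u v.
Proof. intros H <-. apply path_iter; auto. Qed.

Lemma dreach_of (P : M -> Prop) u n v : (forall j, j <= n -> P (sp M j u)) -> sp M n u = v ->
  dreach (mpre M) P u v.
Proof. intros H <-. exists n. split. intros j Hj. rewrite iter_sp. auto. apply iter_sp. Qed.

Section NoCycle.
Variable P : M -> Prop.
Variable r : M.
Hypothesis Pr : P r.
Hypothesis Hreach : forall v, P v -> exists n, sp M n v = r.
Hypothesis Hr : forall j, 1 <= j -> sp M j r <> r.
Hypothesis Hedge : forall e, P e -> P (sM M e) -> e <> r.

Definition h (v : M) : nat := epsilon (inhabits 0) (fun n => sp M n v = r).

Lemma h_spec v : P v -> sp M (h v) v = r.
Proof. intros Hv. unfold h. apply epsilon_spec. auto. Qed.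

Lemma h_uniq v n n' : sp M n v = r -> sp M n' v = r -> n = n'.
Proof.
  intros H1 H2. destruct (lt_eq_lt_dec n n') as [[l|e]|l]; auto.
  - exfalso. apply (Hr (j := n' - n)). lia. rewrite <- H1 at 1. rewrite spA.
    rewrite (sp_eq M v (Nat.sub_add n n' (Nat.lt_le_incl _ _ l))). auto.
  - exfalso. apply (Hr (j := n - n')). lia. rewrite <- H2 at 1. rewrite spA.
    rewrite (sp_eq M v (Nat.sub_add n' n (Nat.lt_le_incl _ _ l))). auto.
Qed.

Lemma h_edge e : P e -> P (sM M e) -> h e = S (h (sM M e)).
Proof.
  intros H1 H2. pose proof (h_spec H1) as He. destruct (h e) as [|p] eqn:E.
  - rewrite sp0 in He. exfalso. exact (Hedge H1 H2 He).
  - f_equal. eapply h_uniq; [|apply h_spec; exact H2]. rewrite sM_sp, spA, Nat.add_1_r. auto.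
Qed.

Lemma no_ucycle : ~ ucycle (mpre M) P.
Proof.
  intros [vs [es [Hlen [HL [Hvs [Hes Hj]]]]]].
  set (L := length vs) in *.
  destruct (max_index (fun j => h (nth j vs (ppt M))) HL) as [i [Hi Hmax]].
  destruct (Hj i Hi) as [Pe [Pse [[E1 E2]|[E1 E2]]]].
  2:{ assert (HS : S i mod L < L) by (apply Nat.mod_upper_bound; lia).
      specialize (Hmax _ HS). simpl in Hmax. rewrite E2, E1 in Hmax.
      rewrite (h_edge Pe Pse) in Hmax. lia. }
  set (j := match i with 0 => L - 1 | S i' => i' end).
  assert (Hjl : j < L) by (unfold j; destruct i; lia).
  assert (Hji : S j mod L = i).
  { unfold j. destruct i.
    - replace (S (L - 1)) with L by lia. apply Nat.mod_same. lia.
    - apply Nat.mod_small. lia. }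
  destruct (Hj j Hjl) as [Pe' [Pse' [[F1 F2]|[F1 F2]]]]; rewrite Hji in F2.
  - specialize (Hmax j Hjl). simpl in Hmax. rewrite F1, F2 in Hmax.
    rewrite (h_edge Pe' Pse') in Hmax. lia.
  - destruct (Nat.eq_dec j i) as [Eji|Nji].
    + rewrite Eji in F1. assert (H : nth i es (ppt M) = sM M (nth i es (ppt M))) by congruence.
      pose proof (h_edge Pe Pse) as Hh. rewrite <- H in Hh. lia.
    + apply Nji. apply (proj1 (NoDup_nth es (ppt M)) Hes); try lia. congruence.
Qed.
End NoCycle.
End Graph.
Set Implicit Arguments.

Section Types.
Variable M : module tmon.

Lemma last_nonzero k x : sp M k x = ppt M -> x <> ppt M ->
  exists n, sp M n x <> ppt M /\ sp M (S n) x = ppt M.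
Proof.
  induction k; intros H Hx.
  - rewrite sp0 in H. contradiction.
  - destruct (classic (sp M k x = ppt M)) as [E|E]; eauto.
Qed.

Lemma sp_zero_after a j m : j <= a -> sp M j m = ppt M -> sp M a m = ppt M.
Proof.
  intros Hj H. replace a with ((a - j) + j) by lia. rewrite <- spA, H. apply sp_pt.
Qed.

Lemma type1 : (forall m : M, tor M m) -> (exists x, x <> ppt M) ->
  (forall x y, x <> ppt M -> y <> ppt M -> Ez M x y) -> gamma_type1 (mpre M).
Proof.
  intros Ht [x Hx] Hc.
  destruct (Ht x) as [k Hk]. destruct (@last_nonzero k x Hk Hx) as [n [Hr1 Hr2]].
  set (r := sp M n x) in *.
  assert (Hr : sp M 1 r = ppt M) by (unfold r; rewrite spA; exact Hr2).
  assert (reach : forall v, v <> ppt M -> exists a, sp M a v = r /\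
            forall j, j <= a -> sp M j v <> ppt M).
  { intros v Hv. destruct (Hc v r Hv Hr1) as [a [b [H1 H2]]].
    destruct b. rewrite sp0 in H1. exists a. split; auto.
    intros j Hj E. apply H2. apply (@sp_zero_after _ _ _ Hj E).
    exfalso. apply H2. rewrite H1. apply (@sp_zero_after _ 1 _); auto. lia. }
  assert (uniq : forall r', r' <> ppt M -> sp M 1 r' = ppt M -> r' = r).
  { intros r' H1 H2. destruct (reach r' H1) as [a [Ha _]]. destruct a.
    rewrite sp0 in Ha; auto. exfalso. apply Hr1. rewrite <- Ha.
    apply (@sp_zero_after _ 1 _); auto. lia. }
  assert (HP : forall e, gvert (mpre M) e -> gvert (mpre M) (sM M e) -> e <> r).
  { intros e _ H2 E. subst. apply H2. exact Hr. }
  split; [split|split].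
  - intros u v Hu Hv. destruct (reach u Hu) as [a [Ha Ha']]. destruct (reach v Hv) as [b [Hb Hb']].
    apply rt_trans with r. apply (path_to M _ _ (n := a)); auto.
    apply crt_sym. apply uadj_sym. apply (path_to M _ _ (n := b)); auto.
  - apply (no_ucycle M (P := gvert (mpre M)) (r := r)); auto.
    + intros v Hv. destruct (reach v Hv) as [a [Ha _]]. eauto.
    + intros j Hj E. apply Hr1. rewrite <- E. apply (@sp_zero_after _ 1 _); auto.
  - exists r. split. split. exact Hr1. intro H. apply H. exact Hr.
    intros r' [H1 H2]. symmetry. apply uniq; auto. apply NNPP. exact H2.
  - intros r' v [H1 H2] Hv. assert (r' = r) by (apply uniq; auto; apply NNPP; exact H2). subst r'.
    destruct (reach v Hv) as [a [Ha Ha']]. apply (dreach_of M _ _ (n := a)); auto.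
Qed.

Definition cyclic := exists (y : M) i p, y <> ppt M /\ 1 <= p /\ sp M (i + p) y = sp M i y.

Hypothesis Htf : forall m : M, tor M m -> m = ppt M.
Hypothesis Hc : forall x y, x <> ppt M -> y <> ppt M -> Ez M x y.

Lemma sp_nz j m : m <> ppt M -> sp M j m <> ppt M.
Proof. intros Hm E. apply Hm. apply Htf. exists j. exact E. Qed.

Lemma type3 : cyclic -> gamma_type3 (mpre M).
Proof.
  intros [y [i [p [Hy [Hp Hyp]]]]].
  set (c0 := sp M i y).
  assert (Hc0 : sp M p c0 = c0) by (unfold c0; rewrite spA, Nat.add_comm; exact Hyp).
  assert (Hc0n : c0 <> ppt M) by (apply sp_nz; auto).
  destruct (least (fun p => 1 <= p /\ sp M p c0 = c0) p (conj Hp Hc0)) as [k [[Hk1 Hk] Hmin]].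
  assert (per : forall q n, sp M (q * k + n) c0 = sp M n c0).
  { induction q; intros n. reflexivity. replace (S q * k + n) with ((q * k + n) + k) by lia.
    rewrite <- spA, Hk. apply IHq. }
  assert (modl : forall n, sp M n c0 = sp M (n mod k) c0).
  { intros n. rewrite (Nat.div_mod_eq n k) at 1. rewrite Nat.mul_comm. apply per. }
  set (cs := map (fun j => sp M j c0) (seq 0 k)).
  assert (Hlen : length cs = k) by (unfold cs; rewrite length_map, length_seq; auto).
  assert (Hnth : forall j, j < k -> nth j cs (ppt M) = sp M j c0).
  { intros j Hj. rewrite (nth_indep _ (ppt M) (sp M 0 c0)) by lia. unfold cs.
    change (sp M 0 c0) with ((fun j => sp M j c0) 0). rewrite map_nth, seq_nth; auto. }
  assert (Hin : forall c, In c cs <-> exists j, j < k /\ c = sp M j c0).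
  { intros c. unfold cs. rewrite in_map_iff. split.
    - intros [j [<- Hj]]. apply in_seq in Hj. exists j. split; auto; lia.
    - intros [j [Hj ->]]. exists j. split; auto. apply in_seq. lia. }
  assert (Hin_sp : forall n, In (sp M n c0) cs).
  { intros n. apply Hin. exists (n mod k). split. apply Nat.mod_upper_bound; lia. apply modl. }
  assert (Hin_cl : forall c n, In c cs -> In (sp M n c) cs).
  { intros c n H. apply Hin in H. destruct H as [j [_ ->]]. rewrite spA. apply Hin_sp. }
  assert (Hin_nz : forall c, In c cs -> c <> ppt M).
  { intros c H. apply Hin in H. destruct H as [j [_ ->]]. apply sp_nz; auto. }
  exists cs. split; [|split; [|split; [|split]]].
  - lia.
  - apply (NoDup_nth cs (ppt M)). rewrite Hlen. intros a b Ha Hb E.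
    rewrite !Hnth in E by auto.
    assert (gen : forall a b, a < b -> b < k -> sp M a c0 = sp M b c0 -> False).
    { clear a b Ha Hb E. intros a b Hab Hb E.
      apply (Hmin (b - a)). lia. split. lia.
      transitivity (sp M (b - a) (sp M k c0)). rewrite Hk; auto.
      rewrite spA. replace (b - a + k) with ((k - a) + b) by lia.
      rewrite <- spA, <- E, spA. replace (k - a + a) with k by lia. auto. }
    destruct (lt_eq_lt_dec a b) as [[l|e]|l]; auto; exfalso.
    + exact (gen a b l Hb E).
    + exact (gen b a l Ha (eq_sym E)).
  - intros c H. apply Hin_nz; auto.
  - intros j Hj. rewrite Hlen in *. rewrite Hnth by auto.
    rewrite Hnth by (apply Nat.mod_upper_bound; lia).
    rewrite sM_sp, spA. apply modl.
  - intros x Hx Hxn K.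
    set (Pnc := fun z => gvert (mpre M) z /\ ~ In z cs).
    set (Rho := fun (y r : M) => exists a, sp M a y = r /\ (forall j, j <= a -> ~ In (sp M j y) cs)
                 /\ In (sp M (S a) y) cs).
    assert (rho_ex : forall y, y <> ppt M -> ~ In y cs -> exists r, Rho y r).
    { intros y0 H1 H2. destruct (Hc H1 Hc0n) as [a [b [E _]]].
      assert (In (sp M a y0) cs) by (rewrite E; apply Hin_sp).
      destruct (least (fun a => In (sp M a y0) cs) a H) as [a' [Ha' Hmin']].
      destruct a'. rewrite sp0 in Ha'. contradiction.
      exists (sp M a' y0), a'. split; auto. split; auto. intros j Hj. apply Hmin'. lia. }
    assert (rho_uniq : forall y r r', Rho y r -> Rho y r' -> r = r').
    { intros y0 r r' [a [Ha [Ha' Ha'']]] [b [Hb [Hb' Hb'']]].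
      destruct (lt_eq_lt_dec a b) as [[l|e]|l].
      - exfalso. apply (Hb' (S a)); auto.
      - rewrite e in Ha; congruence.
      - exfalso. apply (Ha' (S b)); auto. }
    assert (rho_step : forall e r, ~ In e cs -> Rho (sM M e) r -> Rho e r).
    { intros e r H [a [Ha [Ha' Ha'']]]. rewrite sM_sp, spA in Ha, Ha''.
      exists (a + 1). split; auto. split.
      - intros j Hj. destruct j. rewrite sp0; auto.
        specialize (Ha' j ltac:(lia)). rewrite sM_sp, spA in Ha'.
        replace (S j) with (j + 1) by lia. auto.
      - replace (S (a + 1)) with (S a + 1) by lia. auto. }
    assert (rho_inv : forall u v, clos_refl_trans _ (uadj (mpre M) Pnc) u v ->
              forall r, Rho u r -> Rho v r).
    { intros u v H. induction H; auto.
      destruct H as [e [[He1 He2] [[Hs1 Hs2] [[-> ->]|[-> ->]]]]]; intros r Hr.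
      - destruct (rho_ex _ Hs1 Hs2) as [r' Hr']. pose proof (rho_step _ _ He2 Hr').
        rewrite (rho_uniq _ _ _ Hr H); auto.
      - apply rho_step; auto. }
    destruct (rho_ex x Hx Hxn) as [r0 Hr0].
    assert (K_rho : forall v, K v -> Rho v r0).
    { intros v [_ Hv]. eapply rho_inv; eauto. }
    assert (K_iter : forall v a r, K v -> sp M a v = r -> (forall j, j <= a -> ~ In (sp M j v) cs) ->
              forall j, j <= a -> K (sp M j v)).
    { intros v a r Kv Ha Ha' j Hj. split. split. apply sp_nz. apply (proj1 (proj1 Kv)). auto.
      apply rt_trans with v. apply (proj2 Kv).
      apply path_iter. intros j' Hj'. split. apply sp_nz. apply (proj1 (proj1 Kv)). apply Ha'; lia. }
    assert (Kx : K x) by (split; [split; auto|apply rt_refl]).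
    destruct Hr0 as [a0 [Ha0 [Ha0' Ha0'']]] eqn:Er0.
    assert (Kr0 : K r0) by (rewrite <- Ha0; apply (K_iter x a0 r0); auto).
    assert (nKs : ~ K (sM M r0)).
    { intros [[_ H] _]. apply H. rewrite <- Ha0, sM_sp, spA. rewrite Nat.add_1_l. auto. }
    assert (root_eq : forall r, is_root (mpre M) K r -> r = r0).
    { intros r [Kr nK]. destruct (K_rho r Kr) as [a [Ha [Ha' Ha'']]]. destruct a.
      rewrite sp0 in Ha; auto. exfalso. apply nK.
      rewrite sM_sp. apply (K_iter r (S a) r0); auto. lia. }
    assert (reachK : forall v, K v -> exists a, sp M a v = r0 /\ forall j, j <= a -> K (sp M j v)).
    { intros v Kv. destruct (K_rho v Kv) as [a [Ha [Ha' _]]]. exists a. split; auto.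
      intros j Hj. apply (K_iter v a r0); auto. }
    split; [split; [split|split]|].
    + intros u v Ku Kv. destruct (reachK u Ku) as [a [Ha Ha']]. destruct (reachK v Kv) as [b [Hb Hb']].
      apply rt_trans with r0. apply (path_to M _ _ (n := a)); auto.
      apply crt_sym. apply uadj_sym. apply (path_to M _ _ (n := b)); auto.
    + apply (no_ucycle M (P := K) (r := r0)); auto.
      * intros v Kv. destruct (reachK v Kv) as [a [Ha _]]. eauto.
      * intros j Hj E. destruct j. lia. apply (proj2 (proj1 Kr0)). rewrite <- E.
        replace (S j) with (j + 1) by lia. rewrite <- spA. apply Hin_cl.
        rewrite <- Ha0, spA. rewrite Nat.add_1_l. auto.
      * intros e _ H2 E. rewrite E in H2. contradiction.
    + exists r0. split. split; auto. intros r Hr. symmetry. apply root_eq; auto.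
    + intros r v Hr Kv. rewrite (root_eq r Hr). destruct (reachK v Kv) as [a [Ha Ha']].
      apply (dreach_of M _ _ (n := a)); auto.
    + intros r Hr. rewrite (root_eq r Hr), <- Ha0, sM_sp, spA, Nat.add_1_l. auto.
Qed.
End Types.
Set Implicit Arguments.

Section T2.
Variable M : module tmon.
Hypothesis Htf : forall m : M, tor M m -> m = ppt M.
Hypothesis Hc : forall x y, x <> ppt M -> y <> ppt M -> Ez M x y.

Lemma spnz j m : m <> ppt M -> sp M j m <> ppt M.
Proof. intros Hm E. apply Hm. apply Htf. exists j. exact E. Qed.

Lemma type2 : ~ cyclic M -> fingen (mpre M) -> (exists x, x <> ppt M) -> gamma_type2 (mpre M).
Proof.
  intros Hnc [gs Hgs] [x Hx].
  assert (acyc : forall y i j, y <> ppt M -> sp M i y = sp M j y -> i = j).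
  { intros y i j Hy E. destruct (lt_eq_lt_dec i j) as [[l|e]|l]; auto; exfalso; apply Hnc.
    - exists y, i, (j - i). split; auto. split. lia. rewrite E. apply sp_eq; lia.
    - exists y, j, (i - j). split; auto. split. lia. rewrite <- E. apply sp_eq; lia. }
  assert (rep : forall m, m <> ppt M -> exists g c, In g gs /\ g <> ppt M /\ m = sp M c g).
  { intros m Hm. destruct (Hgs m) as [E|[a [g [Hg E]]]]. contradiction.
    destruct a as [c|]. 2:{ rewrite pact_None in E. contradiction. }
    exists g, c. split; auto. split; auto. intro Eg. apply Hm. rewrite E, Eg. apply sp_pt. }
  assert (bound : forall l : list M, exists A N, forall g, In g l -> g <> ppt M ->
            exists a b, a <= A /\ b <= N /\ sp M a g = sp M b x).
  { clear Hgs rep. induction l as [|g0 l IH].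
    - exists 0, 0. intros g [].
    - destruct IH as [A [N HAN]]. destruct (classic (g0 = ppt M)) as [E|E].
      + exists A, N. intros g [<-|Hg] Hg0. contradiction. auto.
      + destruct (Hc E Hx) as [a [b [Hab _]]].
        exists (max A a), (max N b). intros g [<-|Hg] Hg0.
        * exists a, b. split. lia. split. lia. auto.
        * destruct (HAN g Hg Hg0) as [a' [b' [H1 [H2 H3]]]]. exists a', b'. split. lia. split. lia. auto. }
  destruct (bound gs) as [A [N HAN]].
  set (v := fun i => sp M (S (N + i)) x).
  set (r := sp M N x).
  set (T := fun y => y <> ppt M /\ forall i, y <> v i).
  assert (in_T_bound : forall y g c a b, T y -> y = sp M c g -> sp M a g = sp M b x -> b <= N -> c <= a + N).
  { intros y g c a b [Ty1 Ty2] Ey Eab Hb. apply NNPP. intro Hlt.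
    apply (Ty2 (c - a + b - S N)). rewrite Ey. unfold v.
    replace c with ((c - a) + a) by lia. rewrite <- spA, Eab, spA. apply sp_eq. lia. }
  assert (Hsr : sM M r = v 0) by (unfold r, v; rewrite sM_sp, spA; apply sp_eq; lia).
  assert (root_char : forall y, T y -> ~ T (sM M y) -> y = r).
  { intros y Ty nT. assert (Hs : sM M y <> ppt M) by (rewrite sM_sp; apply spnz; apply Ty).
    assert (Hi : exists i, sM M y = v i).
    { apply NNPP. intro H. apply nT. split; auto. intros i E. apply H. eauto. }
    destruct Hi as [i Hi]. destruct (rep y (proj1 Ty)) as [g [c [Hg [Hg0 Ey]]]].
    destruct (HAN g Hg Hg0) as [a [b [Ha [Hb Eab]]]].
    destruct (le_lt_dec a c).
    - assert (Ey' : y = sp M (c - a + b) x).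
      { rewrite Ey. replace c with ((c - a) + a) by lia. rewrite <- spA, Eab, spA. apply sp_eq; lia. }
      rewrite Ey', sM_sp, spA in Hi. unfold v in Hi. apply acyc in Hi; auto.
      destruct i.
      + rewrite Ey'. unfold r. apply sp_eq. lia.
      + exfalso. apply (proj2 Ty i). rewrite Ey'. unfold v. apply sp_eq. lia.
    - exfalso. assert (sp M a g = sp M (a - S c + S (N + i)) x).
      { replace a with ((a - S c) + (1 + c)) at 1 by lia. rewrite <- (spA M _ (1 + c)), <- spA, <- Ey.
        rewrite <- sM_sp, Hi. unfold v. apply spA. }
      rewrite Eab in H. apply acyc in H; auto. lia. }
  assert (Tr : T r).
  { split. apply spnz; auto. intros i E. unfold r, v in E. apply acyc in E; auto. lia. }
  assert (nTsr : ~ T (sM M r)) by (rewrite Hsr; intros [_ H]; apply (H 0); auto).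
  assert (reachT : forall w, T w -> exists a, sp M a w = r /\ forall j, j <= a -> T (sp M j w)).
  { intros w Tw. destruct (Hc (proj1 Tw) Hx) as [a [b [Hab _]]].
    assert (Q : ~ T (sp M (S N + a) w)).
    { rewrite <- spA, Hab, spA. intros [_ H]. apply (H b). unfold v. apply sp_eq; lia. }
    destruct (least (fun m => ~ T (sp M m w)) _ Q) as [m [Hm Hmin]].
    destruct m. rewrite sp0 in Hm. contradiction.
    exists m. assert (Tm : T (sp M m w)) by (apply NNPP; apply Hmin; lia).
    split.
    - apply root_char; auto. rewrite sM_sp, spA. rewrite Nat.add_1_l. auto.
    - intros j Hj. apply NNPP. apply Hmin. lia. }
  exists T, v, r.
  split; [|split; [|split; [|split; [|split; [|split; [|split; [|split; [|split]]]]]]]].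
  - intros y Ty. apply Ty.
  - exists (flat_map (fun g => map (fun c => sp M c g) (seq 0 (S (A + N)))) gs).
    intros y Ty. destruct (rep y (proj1 Ty)) as [g [c [Hg [Hg0 Ey]]]].
    destruct (HAN g Hg Hg0) as [a [b [Ha [Hb Eab]]]].
    pose proof (in_T_bound y g c a b Ty Ey Eab Hb).
    apply in_flat_map. exists g. split; auto. apply in_map_iff. exists c. split; auto.
    apply in_seq. lia.
  - intros i. apply spnz; auto.
  - intros i. unfold v. rewrite sM_sp, spA. apply sp_eq; lia.
  - intros i j E. unfold v in E. apply acyc in E; auto. lia.
  - intros y. split.
    + intros Hy. destruct (classic (exists i, y = v i)); auto. left. split; auto.
      intros i E. apply H. eauto.
    + intros [Ty|[i ->]]. apply Ty. apply spnz; auto.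
  - intros y i Ty. apply Ty.
  - split; [split|split].
    + intros u w Tu Tw. destruct (reachT u Tu) as [a [Ha Ha']]. destruct (reachT w Tw) as [b [Hb Hb']].
      apply rt_trans with r. apply (path_to M _ _ (n := a)); auto.
      apply crt_sym. apply uadj_sym. apply (path_to M _ _ (n := b)); auto.
    + apply (no_ucycle M (P := T) (r := r)); auto.
      * intros w Tw. destruct (reachT w Tw) as [a [Ha _]]. eauto.
      * intros j Hj E. unfold r in E. rewrite spA in E. apply acyc in E; auto. lia.
      * intros e _ H2 E. rewrite E in H2. contradiction.
    + exists r. split. split; auto. intros r' [H1 H2]. symmetry. apply root_char; auto.
    + intros r' w [H1 H2] Tw. rewrite (root_char r' H1 H2). destruct (reachT w Tw) as [a [Ha Ha']].
      apply (dreach_of M _ _ (n := a)); auto.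
  - split; auto.
  - exact Hsr.
Qed.
End T2.
Set Implicit Arguments.

Lemma inv_iso (A : monoid0) (N P : premodule A) (g : N -> P) :
  is_morphism g -> (forall y, exists x, g x = y) -> (forall x x', g x = g x' -> x = x') ->
  exists h : P -> N, is_iso h /\ (forall x, h (g x) = x) /\ (forall y, g (h y) = y).
Proof.
  intros [Hg0 Hg1] Hs Hi.
  set (h := fun y => epsilon (inhabits (ppt N)) (fun x => g x = y)).
  assert (Hgh : forall y, g (h y) = y) by (intros y; unfold h; apply epsilon_spec; auto).
  assert (Hhg : forall x, h (g x) = x) by (intros x; apply Hi; auto).
  exists h. split; [|split; auto]. split.
  - split. rewrite <- Hg0. apply Hhg.
    intros a y. rewrite <- (Hgh y) at 1. rewrite <- Hg1. apply Hhg.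
  - exists g. split; auto.
Qed.

Lemma iso_props (A : monoid0) (N P : premodule A) (f : N -> P) : is_iso f ->
  is_morphism f /\ (forall y, exists x, f x = y) /\ (forall x x', f x = f x' -> x = x').
Proof.
  intros [Hm [g [H1 H2]]]. split; auto. split. intros y; exists (g y); auto.
  intros x x' E. rewrite <- (H1 x), <- (H1 x'), E. auto.
Qed.

Lemma sig_eq_pi (T : Type) (P : T -> Prop) (a b : T) (ha : P a) (hb : P b) :
  a = b -> exist P a ha = exist P b hb.
Proof. intros ->. f_equal. apply proof_irrelevance. Qed.

Section Orbit.
Variable X : premodule lmon.
Hypothesis H1 : forall q, pact X (Some 0%Z) q = q.
Hypothesis H2 : forall z w q, pact X (Some z) (pact X (Some w) q) = pact X (Some (z + w)%Z) q.
Hypothesis H3 : forall q, pact X None q = ppt X.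
Hypothesis H4 : forall a, pact X a (ppt X) = ppt X.
Hypothesis Htf : forall z q, pact X (Some z) q = ppt X -> q = ppt X.
Variable q0 : X.
Hypothesis Hq0 : q0 <> ppt X.
Hypothesis Htr : forall q, q <> ppt X -> exists z, q = pact X (Some z) q0.

Lemma act_cancel z w : pact X (Some z) q0 = pact X (Some w) q0 -> pact X (Some (z - w)%Z) q0 = q0.
Proof.
  intros E. rewrite <- (H1 q0) at 2. replace 0%Z with (-w + w)%Z by lia.
  rewrite <- H2, <- E, H2. f_equal. f_equal. lia.
Qed.

Lemma act_morph_base : forall a y, pact X (lmul a y) q0 = pact X a (pact X y q0).
Proof.
  intros [z|] [w|]; simpl.
  - rewrite H2. reflexivity.
  - rewrite H3, H4. reflexivity.
  - rewrite !H3. reflexivity.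
  - rewrite !H3. reflexivity.
Qed.

Lemma L_bij : (forall z, pact X (Some z) q0 = q0 -> z = 0%Z) ->
  let g := fun y : Lmod => pact X y q0 in
  is_morphism g /\ (forall y, exists x, g x = y) /\ (forall x x', g x = g x' -> x = x').
Proof.
  intros Hfree g. split; [split|split].
  - apply H3.
  - intros a y. apply act_morph_base.
  - intros y. destruct (classic (y = ppt X)) as [->|Hy].
    + exists None. apply H3.
    + destruct (Htr Hy) as [z ->]. exists (Some z). reflexivity.
  - unfold g. intros [z|] [w|] E; auto.
    + apply act_cancel, Hfree in E. f_equal. lia.
    + rewrite H3 in E. exfalso. apply Hq0. eapply Htf; eauto.
    + rewrite H3 in E. exfalso. apply Hq0. eapply Htf; eauto.
Qed.

Section Cyc.
Variable k : nat.
Hypothesis Hk1 : 1 <= k.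
Hypothesis Hk : pact X (Some (Z.of_nat k)) q0 = q0.
Hypothesis Hmin : forall j, j < k -> ~ (1 <= j /\ pact X (Some (Z.of_nat j)) q0 = q0).

Lemma mult_nat n : pact X (Some (Z.of_nat k * Z.of_nat n)%Z) q0 = q0.
Proof.
  induction n. rewrite Z.mul_0_r. apply H1.
  rewrite Nat2Z.inj_succ. replace (Z.of_nat k * Z.succ (Z.of_nat n))%Z with
    (Z.of_nat k + Z.of_nat k * Z.of_nat n)%Z by lia. rewrite <- H2, IHn. exact Hk.
Qed.

Lemma mult_Z w : pact X (Some (Z.of_nat k * w)%Z) q0 = q0.
Proof.
  destruct (Z_le_gt_dec 0 w).
  - rewrite <- (Z2Nat.id w) by lia. apply mult_nat.
  - rewrite <- (mult_nat (Z.to_nat (- w))) at 1. rewrite H2.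
    rewrite <- (H1 q0) at 2. f_equal. f_equal. lia.
Qed.

Lemma act_mod w : pact X (Some w) q0 = pact X (Some (w mod Z.of_nat k)%Z) q0.
Proof.
  rewrite (Z.div_mod w (Z.of_nat k)) at 1 by lia.
  rewrite Z.add_comm, <- H2, mult_Z. reflexivity.
Qed.

Lemma stab_mod w : pact X (Some w) q0 = q0 -> (w mod Z.of_nat k = 0)%Z.
Proof.
  intros E. rewrite act_mod in E. pose proof (Z.mod_pos_bound w (Z.of_nat k) ltac:(lia)).
  apply NNPP. intro Hn. apply (@Hmin (Z.to_nat (w mod Z.of_nat k))). lia.
  split. lia. rewrite Z2Nat.id by lia. exact E.
Qed.

Lemma Cact0 (c : Cmod k) : Cact (Some 0%Z) c = c.
Proof.
  destruct c as [[i|] h]; simpl; auto. apply sig_eq_pi. f_equal.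
  simpl in h. rewrite Z.add_0_r. apply Z.mod_small. lia. unfold Cpt. apply sig_eq_pi. reflexivity.
Qed.

Lemma C_bij : let g := fun c : Cmod k => pact X (proj1_sig c) q0 in
  is_morphism g /\ (forall y, exists x, g x = y) /\ (forall x x', g x = g x' -> x = x').
Proof.
  intros g. split; [split|split].
  - apply H3.
  - intros [z|] [[i|] h]; simpl; unfold g; simpl.
    + rewrite H2, <- act_mod, Z.add_comm. reflexivity.
    + rewrite H3, H4. reflexivity.
    + rewrite !H3. reflexivity.
    + rewrite !H3. reflexivity.
  - intros y. destruct (classic (y = ppt X)) as [->|Hy].
    + exists (Cpt k). apply H3.
    + destruct (Htr Hy) as [z ->].
      exists (exist _ (Some (z mod Z.of_nat k)%Z) (Z.mod_pos_bound z (Z.of_nat k) ltac:(lia) : cvalid k (Some (z mod Z.of_nat k)%Z))).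
      unfold g; simpl. symmetry. apply act_mod.
  - unfold g. intros [[i|] h] [[j|] h'] E; simpl in E; apply sig_eq_pi.
    + apply act_cancel, stab_mod in E. simpl in h, h'.
      pose proof (Z.div_mod (i - j) (Z.of_nat k) ltac:(lia)).
      rewrite E in H. f_equal. set (qq := ((i - j) / Z.of_nat k)%Z) in H. assert (qq = 0)%Z by nia. nia.
    + rewrite H3 in E. exfalso. apply Hq0. eapply Htf; eauto.
    + rewrite H3 in E. exfalso. apply Hq0. eapply Htf; eauto.
    + reflexivity.
Qed.
End Cyc.

Lemma get_period : (exists z, z <> 0%Z /\ pact X (Some z) q0 = q0) ->
  exists k, 1 <= k /\ pact X (Some (Z.of_nat k)) q0 = q0 /\
    forall j, j < k -> ~ (1 <= j /\ pact X (Some (Z.of_nat j)) q0 = q0).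
Proof.
  intros [z [Hz E]].
  assert (Hp : 1 <= Z.to_nat (Z.abs z) /\ pact X (Some (Z.of_nat (Z.to_nat (Z.abs z)))) q0 = q0).
  { split. lia. rewrite Z2Nat.id by lia. destruct (Z_le_gt_dec 0 z).
    - rewrite Z.abs_eq by lia. auto.
    - rewrite Z.abs_neq by lia. rewrite <- E at 1. rewrite H2.
      rewrite <- (H1 q0) at 2. f_equal. f_equal. lia. }
  destruct (least (fun p => 1 <= p /\ pact X (Some (Z.of_nat p)) q0 = q0) _ Hp) as [k [[Hk1 Hk] Hmin]]. exists k. auto.
Qed.

Section Glue.
Variable Y : premodule lmon.
Variable glue : X -> Y.
Hypothesis Hglue : is_iso glue.

Lemma comp_bij (N : premodule lmon) (g : N -> X) :
  is_morphism g /\ (forall y, exists x, g x = y) /\ (forall x x', g x = g x' -> x = x') ->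
  is_morphism (fun x => glue (g x)) /\ (forall y, exists x, glue (g x) = y) /\
     (forall x x', glue (g x) = glue (g x') -> x = x').
Proof.
  intros [[Hg0 Hg1] [Hs Hi]]. destruct (iso_props Hglue) as [[Hf0 Hf1] [Hfs Hfi]].
  split; [split|split].
  - rewrite Hg0; auto.
  - intros a x. rewrite Hg1; auto.
  - intros y. destruct (Hfs y) as [x' <-]. destruct (Hs x') as [x <-]. eauto.
  - intros x x' E. apply Hi, Hfi; auto.
Qed.

Lemma assemble_gen (N : premodule lmon) (g : N -> X) :
  is_morphism g /\ (forall y, exists x, g x = y) /\ (forall x x', g x = g x' -> x = x') ->
  exists (al : X -> N) (be : Y -> N), is_iso al /\ is_iso be /\ forall q, be (glue q) = al q.
Proof.
  intros Hg. pose proof (comp_bij Hg) as Hg'.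
  destruct Hg as [Hgm [Hgs Hgi]]. destruct (inv_iso Hgm Hgs Hgi) as [al [Hal [Hal1 Hal2]]].
  destruct Hg' as [Hgm' [Hgs' Hgi']]. destruct (inv_iso Hgm' Hgs' Hgi') as [be [Hbe [Hbe1 Hbe2]]].
  exists al, be. split; auto. split; auto. intros q. rewrite <- (Hal2 q) at 1. apply Hbe1.
Qed.

Lemma assembleL : (forall z, pact X (Some z) q0 = q0 -> z = 0%Z) ->
  exists (al : X -> Lmod) (be : Y -> Lmod) (n : Z),
     is_iso al /\ is_iso be /\ forall q, be (glue q) = phi_n n (al q).
Proof.
  intros Hf. destruct (assemble_gen (L_bij Hf)) as [al [be [H5 [H6 H7]]]].
  exists al, be, 0%Z. split; auto. split; auto. intros q. rewrite H7. unfold phi_n.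
  symmetry. apply lmul1.
Qed.

Lemma assembleC : (exists z, z <> 0%Z /\ pact X (Some z) q0 = q0) ->
  exists (k : nat) (al : X -> Cmod k) (be : Y -> Cmod k) (m : Z),
     0 < k /\ is_iso al /\ is_iso be /\ forall q, be (glue q) = @psi_m k m (al q).
Proof.
  intros Hz. destruct (get_period Hz) as [k [Hk1 [Hk Hmin]]].
  destruct (assemble_gen (C_bij Hk1 Hk Hmin)) as [al [be [H5 [H6 H7]]]].
  exists k, al, be, 0%Z. split. lia. split; auto. split; auto. intros q. rewrite H7. unfold psi_m.
  symmetry. apply Cact0. auto.
Qed.
End Glue.
End Orbit.
Set Implicit Arguments.

Section L7.
Variable M : module tmon.
Variable sgn : bool.

Lemma inloc_tor q : inloc (M:=mpre M) (tor M) q <-> q = ppt (loc sgn (mpre M)).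
Proof.
  split.
  - intros [m [n [Hm ->]]]. apply (cl_zero M m n). auto.
  - intros ->. exists (ppt M), 0. split. apply tor_pt. reflexivity.
Qed.

Lemma inloc_TF q : inloc (M:=mpre M) (fun m => m = ppt M \/ ~ tor M m) q.
Proof.
  destruct (cl_surj M q) as [m [n ->]]. destruct (classic (tor M m)).
  - exists (ppt M), 0. split; [auto|]. apply (cl_zero M m n). auto.
  - exists m, n. split; auto.
Qed.

Lemma inloc_all q : inloc (M:=mpre M) (fun _ => True) q.
Proof. destruct (cl_surj M q) as [m [n ->]]. exists m, n. split; auto. Qed.

Lemma inloc_triv q : inloc (M:=mpre M) (fun m => m = ppt M) q <-> q = ppt (loc sgn (mpre M)).
Proof.
  split.
  - intros [m [n [-> ->]]]. apply (cl_zero M (ppt M) n). apply tor_pt.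
  - intros ->. exists (ppt M), 0. split; reflexivity.
Qed.

Lemma all_zero : (forall m, tor M m) -> forall q : loc_car (mpre M), q = ppt (loc sgn (mpre M)).
Proof. intros H q. destruct (cl_surj M q) as [m [n ->]]. apply (cl_zero M m n). auto. Qed.

Hypothesis tf : forall m : M, tor M m -> m = ppt M.

Lemma inloc_P x q : x <> ppt M ->
  (inloc (M:=mpre M) (fun m => m = ppt M \/ Ez M x m) q <->
   q = ppt (loc sgn (mpre M)) \/ exists z, q = pact (loc sgn (mpre M)) (Some z) (cl M x 0)).
Proof.
  intros Hx. split.
  - intros [m [n [[->|Hm] ->]]].
    + left. apply (cl_zero M (ppt M) n). apply tor_pt.
    + right. apply (orbit_cl sgn tf x n (proj2 (Ez_nz Hm))). auto.
  - intros [->|[z Hz]].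
    + exists (ppt M), 0. split; auto.
    + destruct (cl_surj M q) as [m [n E]]. exists m, n. split; [|exact E].
      destruct (classic (m = ppt M)) as [Hm|Hm]; auto. right.
      apply (orbit_cl sgn tf x n Hm). exists z. rewrite <- E. exact Hz.
Qed.

Lemma inloc_Q x q : x <> ppt M ->
  (inloc (M:=mpre M) (fun m => m = ppt M \/ ~ Ez M x m) q <->
   q = ppt (loc sgn (mpre M)) \/ ~ exists z, q = pact (loc sgn (mpre M)) (Some z) (cl M x 0)).
Proof.
  intros Hx. split.
  - intros [m [n [[->|Hm] ->]]].
    + left. apply (cl_zero M (ppt M) n). apply tor_pt.
    + destruct (classic (m = ppt M)) as [E|E].
      * left. rewrite E. apply (cl_zero M (ppt M) n). apply tor_pt.
      * right. intro Hex. apply Hm. apply (orbit_cl sgn tf x n E). exact Hex.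
  - intros [->|Hn].
    + exists (ppt M), 0. split; auto.
    + destruct (cl_surj M q) as [m [n E]]. exists m, n. split; [|exact E].
      destruct (classic (m = ppt M)) as [Hm|Hm]; auto. right. intro HE.
      apply Hn. rewrite E. apply (orbit_cl sgn tf x n Hm). exact HE.
Qed.

Hypothesis conn : forall x y, x <> ppt M -> y <> ppt M -> Ez M x y.

Lemma stab_cyc (q : loc_car (mpre M)) : q <> ppt (loc sgn (mpre M)) ->
  ((exists z, z <> 0%Z /\ pact (loc sgn (mpre M)) (Some z) q = q) <-> cyclic M).
Proof.
  intros Hq. destruct (cl_surj M q) as [m [n ->]].
  assert (Hm : m <> ppt M).
  { intro E. apply Hq. rewrite E. apply (cl_zero M (ppt M) n). apply tor_pt. }
  split.
  - intros [z [Hz E]]. rewrite pactX, act_cl in E. apply cl_eq in E. destruct E as [k Hk].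
    rewrite spA in Hk.
    assert (Ee sgn z <> 0%Z) by (destruct sgn; simpl; lia).
    destruct (Z_lt_le_dec 0 (Ee sgn z)).
    + exists m, (n + k), (Z.to_nat (Ee sgn z)). split; auto. split. lia.
      transitivity (sp M (n + k + Z.to_nat (Ee sgn z)) m). apply sp_eq; lia.
      rewrite Hk. apply sp_eq; lia.
    + exists m, (n + k), (Z.to_nat (- Ee sgn z)). split; auto. split. lia.
      transitivity (sp M (n + Z.to_nat (- Ee sgn z) + k) m). apply sp_eq; lia.
      rewrite <- Hk. apply sp_eq; lia.
  - intros [y [i [p [Hy [Hp E]]]]]. destruct (conn Hm Hy) as [a [b [Hab _]]].
    assert (Hc : sp M (a + i + p) m = sp M (a + i) m).
    { replace (a + i + p) with ((i + p) + a) by lia. rewrite <- spA, Hab, spA.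
      replace (i + p + b) with (b + (i + p)) by lia. rewrite <- spA, E, spA.
      replace (b + i) with (i + b) by lia. rewrite <- spA, <- Hab, spA. apply sp_eq; lia. }
    destruct (Ee_inv sgn (Z.of_nat p)) as [z Hz]. exists z. split.
    { intro E0. rewrite E0, Ee_0 in Hz. lia. }
    rewrite pactX, act_cl, Hz, Nat2Z.id. replace (Z.to_nat (- Z.of_nat p)) with 0 by lia.
    apply cl_eq. exists (a + i). rewrite spA.
    replace (n + (a + i) + p) with (n + (a + i + p)) by lia. rewrite <- spA, Hc, spA. apply sp_eq; lia.
Qed.
End L7.

Theorem mainTheorem12 (F : triple) :
  indecomposable_triple F -> case1 F \/ case2 F \/ case3 F \/ case4 F.
Proof.
  intros [Hnz Hnd].
  destruct (iso_props (glue_iso F)) as [[Hg0 Hg1] [Hgs Hgi]].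
  assert (gz : forall q, glue F q = ppt (loc true (F2 F)) <-> q = ppt (loc false (F1 F))).
  { intros q. split. intro E. apply Hgi. rewrite Hg0. auto. intros ->. apply Hg0. }
  assert (Hsplit : triple_split F (tor (F1 F)) (fun m => m = ppt (F1 F) \/ ~ tor (F1 F) m)
                     (tor (F2 F)) (fun m => m = ppt (F2 F) \/ ~ tor (F2 F) m)).
  { split. apply wsplit_tor. split. apply wsplit_tor. split.
    - intros q. rewrite (inloc_tor (F1 F) false q), (inloc_tor (F2 F) true (glue F q)).
      symmetry; apply gz.
    - intros q. split; intros _; apply inloc_TF. }
  destruct (classic (nonzero_pred (M:=mpre (F1 F)) (tor (F1 F)) \/
                     nonzero_pred (M:=mpre (F2 F)) (tor (F2 F)))) as [Ht|Ht].
  -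
    assert (T1 : forall m : F1 F, tor (F1 F) m).
    { intro m. apply NNPP. intro Hm. apply Hnd. do 4 eexists. split. exact Hsplit.
      split. exact Ht. left. exists m. split. right; auto. intro E; apply Hm; rewrite E; apply tor_pt. }
    assert (T2 : forall m : F2 F, tor (F2 F) m).
    { intro m. apply NNPP. intro Hm. apply Hnd. do 4 eexists. split. exact Hsplit.
      split. exact Ht. right. exists m. split. right; auto. intro E; apply Hm; rewrite E; apply tor_pt. }
    pose proof (all_zero false T1) as zX. pose proof (all_zero true T2) as zY.
    assert (Hboth : ~ ((exists x : F1 F, x <> ppt (F1 F)) /\ (exists y : F2 F, y <> ppt (F2 F)))).
    { intros [[x Hx] [y Hy]]. apply Hnd.
      exists (fun _ => True), (fun m => m = ppt (F1 F)), (fun m => m = ppt (F2 F)), (fun _ => True).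
      split. split. apply wsplit_all_triv. split. apply wsplit_triv_all.
      split; intros q; split; intros _.
      + apply (inloc_triv _ true). apply zY.
      + apply inloc_all.
      + apply inloc_all.
      + apply (inloc_triv _ false). apply zX.
      + split. left. exists x. split; auto. right. exists y. split; auto. }
    assert (Ttr : torsion_triple F).
    { split. intros m; apply tor_elt; auto. split. intros m; apply tor_elt; auto.
      intros q. exists (Some 0%Z). split. discriminate. rewrite act0_X. apply zX. }
    destruct Hnz as [[x Hx]|[y Hy]].
    + left.
      assert (triv2 : forall y : F2 F, y = ppt (F2 F)).
      { intros y. apply NNPP. intro Hy. apply Hboth. split; eauto. }
      assert (Ind : indecomposable_mod (F1 F)).
      { split. eauto. intros [P [Q [HPQ [HP HQ]]]]. apply Hnd.
        exists P, Q, (fun m => m = ppt (F2 F)), (fun m => m = ppt (F2 F)).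
        split. split. exact HPQ. split.
        { split. apply submod_triv. split. apply submod_triv. split; auto. }
        split; intros q; split; intros _.
        * apply (inloc_triv _ true). apply zY.
        * exists (ppt (F1 F)), 0. split. apply (proj1 (proj1 HPQ)). apply zX.
        * apply (inloc_triv _ true). apply zY.
        * exists (ppt (F1 F)), 0. split. apply (proj1 (proj1 (proj2 HPQ))). apply zX.
        * split; left; auto. }
      split. exact triv2. split. exact Ind. split; [|exact Ttr].
      apply type1; eauto. intros a b Ha Hb. apply indec_conn; auto.
    + right; left.
      assert (triv1 : forall y : F1 F, y = ppt (F1 F)).
      { intros x. apply NNPP. intro Hx. apply Hboth. split; eauto. }
      assert (Ind : indecomposable_mod (F2 F)).
      { split. eauto. intros [P [Q [HPQ [HP HQ]]]]. apply Hnd.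
        exists (fun m => m = ppt (F1 F)), (fun m => m = ppt (F1 F)), P, Q.
        split. split.
        { split. apply submod_triv. split. apply submod_triv. split; auto. }
        split. exact HPQ.
        split; intros q; split; intros _.
        * exists (ppt (F2 F)), 0. split. apply (proj1 (proj1 HPQ)). apply zY.
        * apply (inloc_triv _ false). apply zX.
        * exists (ppt (F2 F)), 0. split. apply (proj1 (proj1 (proj2 HPQ))). apply zY.
        * apply (inloc_triv _ false). apply zX.
        * split; right; auto. }
      split. exact triv1. split. exact Ind. split; [|exact Ttr].
      apply type1; eauto. intros a b Ha Hb. apply indec_conn; auto.
  -
    assert (tf1 : forall m : F1 F, tor (F1 F) m -> m = ppt (F1 F)).
    { intros m Hm. apply NNPP. intro H. apply Ht. left. exists m. split; auto. }
    assert (tf2 : forall m : F2 F, tor (F2 F) m -> m = ppt (F2 F)).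
    { intros m Hm. apply NNPP. intro H. apply Ht. right. exists m. split; auto. }
    assert (Hx : exists x : F1 F, x <> ppt (F1 F)).
    { apply NNPP. intro H0. destruct Hnz as [Hx|[y Hy]]. contradiction.
      destruct (Hgs (cl (F2 F) y 0)) as [q' Hq'].
      assert (q' = ppt (loc false (F1 F))).
      { destruct (cl_surj (F1 F) q') as [m [n ->]].
        assert (m = ppt (F1 F)) by (apply NNPP; intro; apply H0; eauto).
        subst m. apply (cl_zero (F1 F) (ppt (F1 F)) n). apply tor_pt. }
      subst q'. rewrite Hg0 in Hq'. apply Hy. apply tf2. apply (cl_zero (F2 F) y 0).
      symmetry. exact Hq'. }
    destruct Hx as [x Hx].
    set (q0 := cl (F1 F) x 0).
    assert (Hq0 : q0 <> ppt (loc false (F1 F))).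
    { intro E. apply Hx. apply tf1. apply (cl_zero (F1 F) x 0). exact E. }
    destruct (cl_surj (F2 F) (glue F q0)) as [y0 [n0 Hy0]].
    assert (Hy0n : y0 <> ppt (F2 F)).
    { intro E. rewrite E in Hy0. apply Hq0. apply gz. rewrite Hy0.
      apply (cl_zero (F2 F) (ppt (F2 F)) n0). apply tor_pt. }
    assert (Hw : exists w, glue F q0 = pact (loc true (F2 F)) (Some w) (cl (F2 F) y0 0)).
    { rewrite Hy0. apply (orbit_cl true tf2 y0 n0 Hy0n). apply Ez_refl; auto. }
    destruct Hw as [w Hw].
    assert (transfer : forall q, (exists z, glue F q = pact (loc true (F2 F)) (Some z) (cl (F2 F) y0 0))
                  <-> exists z, q = pact (loc false (F1 F)) (Some z) q0).
    { intros q. split.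
      - intros [z Hz]. exists (z - w)%Z. apply Hgi. rewrite Hg1, Hw, actZ_X, Hz.
        f_equal. f_equal. lia.
      - intros [z ->]. exists (z + w)%Z. rewrite Hg1, Hw, actZ_X. reflexivity. }
    assert (Hcs : triple_split F (fun m => m = ppt (F1 F) \/ Ez (F1 F) x m)
                    (fun m => m = ppt (F1 F) \/ ~ Ez (F1 F) x m)
                    (fun m => m = ppt (F2 F) \/ Ez (F2 F) y0 m)
                    (fun m => m = ppt (F2 F) \/ ~ Ez (F2 F) y0 m)).
    { split. apply wsplit_ez. split. apply wsplit_ez. split; intros q.
      - rewrite (@inloc_P (F1 F) false tf1 x q Hx), (@inloc_P (F2 F) true tf2 y0 (glue F q) Hy0n).
        rewrite gz, transfer. reflexivity.
      - rewrite (@inloc_Q (F1 F) false tf1 x q Hx), (@inloc_Q (F2 F) true tf2 y0 (glue F q) Hy0n).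
        rewrite gz, transfer. reflexivity. }
    assert (nzP : nonzero_pred (M:=mpre (F1 F)) (fun m => m = ppt (F1 F) \/ Ez (F1 F) x m)).
    { exists x. split; auto. right. apply Ez_refl; auto. }
    assert (conn1 : forall m : F1 F, m <> ppt (F1 F) -> Ez (F1 F) x m).
    { intros m Hm. apply NNPP. intro Hn. apply Hnd. do 4 eexists. split. exact Hcs.
      split. left; exact nzP. left. exists m. split; auto. }
    assert (conn2 : forall m : F2 F, m <> ppt (F2 F) -> Ez (F2 F) y0 m).
    { intros m Hm. apply NNPP. intro Hn. apply Hnd. do 4 eexists. split. exact Hcs.
      split. left; exact nzP. right. exists m. split; auto. }
    assert (C1 : forall a b, a <> ppt (F1 F) -> b <> ppt (F1 F) -> Ez (F1 F) a b).
    { intros a b Ha Hb. apply Ez_trans with x. apply Ez_sym; auto. auto. }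
    assert (C2 : forall a b, a <> ppt (F2 F) -> b <> ppt (F2 F) -> Ez (F2 F) a b).
    { intros a b Ha Hb. apply Ez_trans with y0. apply Ez_sym; auto. auto. }
    assert (Ind1 : indecomposable_mod (F1 F)) by (apply conn_indec; eauto).
    assert (Ind2 : indecomposable_mod (F2 F)) by (apply conn_indec; eauto).
    assert (Htr : forall q, q <> ppt (loc false (F1 F)) ->
               exists z, q = pact (loc false (F1 F)) (Some z) q0).
    { intros q Hq. destruct (cl_surj (F1 F) q) as [m [n ->]].
      assert (Hm : m <> ppt (F1 F)).
      { intro E. apply Hq. rewrite E. apply (cl_zero (F1 F) (ppt (F1 F)) n). apply tor_pt. }
      apply (orbit_cl false tf1 x n Hm). auto. }
    assert (Hgq0 : glue F q0 <> ppt (loc true (F2 F))) by (rewrite gz; auto).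
    assert (cyc12 : cyclic (F1 F) <-> cyclic (F2 F)).
    { rewrite <- (@stab_cyc (F1 F) false C1 _ Hq0), <- (@stab_cyc (F2 F) true C2 _ Hgq0).
      split; intros [z [Hz E]]; exists z; split; auto.
      - rewrite <- Hg1. f_equal. auto.
      - apply Hgi. rewrite Hg1. auto. }
    assert (TFt : torsionfree_triple F).
    { split. intros m Hm; apply tf1; apply tor_elt; auto. split.
      intros m Hm; apply tf2; apply tor_elt; auto.
      intros q [[z|] [Ha E]]; [|now elim Ha]. exact (tfree_X tf1 E). }
    destruct (classic (cyclic (F1 F))) as [Hcy|Hncy].
    + right; right; right. split. exact Ind1. split. exact Ind2.
      split. apply type3; auto. split. apply type3; auto. apply cyc12; auto.
      split; [|exact TFt].
      apply (assembleC (@act0_X (F1 F) false) (@actZ_X (F1 F) false) (@actN_X (F1 F) false) (act_pt_X (F1 F) false) (tfree_X tf1) Hq0 Htr (glue_iso F)).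
      apply (@stab_cyc (F1 F) false C1 _ Hq0). auto.
    + right; right; left. split. exact Ind1. split. exact Ind2.
      split. apply type2; eauto. apply F1fg.
      split. apply type2; eauto. rewrite <- cyc12; auto. apply F2fg.
      split; [|exact TFt].
      apply (assembleL (@act0_X (F1 F) false) (@actZ_X (F1 F) false) (@actN_X (F1 F) false) (act_pt_X (F1 F) false) (tfree_X tf1) Hq0 Htr (glue_iso F)).
      intros z Hz. apply NNPP. intro Hz0. apply Hncy. apply (@stab_cyc (F1 F) false C1 _ Hq0). eauto.
Qed.
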